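(* Let $X$ be a topological space and $k$ a complete non-Archimedean valued field. For every $x\in \mathrm{BSC}_k(X)$ the support $\mathrm{supp}(x)=\{f\in C_{bd}(X,k): |f|_x=0\}$ is a maximal ideal of $C_{bd}(X,k)$, and the map $$\mathscr F_{\mathrm{supp}}:\mathrm{BSC}_k(X)\to \mathrm{UF}(X),\qquad x\mapsto \mathscr F_{\mathrm{supp}(x)}=\{U\in \mathrm{CO}(X): 1_U\notin \mathrm{supp}(x)\}$$ is a homeomorphism.
   Context: Topological spaces are not assumed Hausdorff. $k$ is a field complete with respect to a non-Archimedean absolute value $|\cdot|$ of rank one (possibly trivial). $C_{bd}(X,k)$ is the commutative $k$-algebra of bounded continuous functions $X\to k$ with the supremum norm $\|f\|=\sup_{x\in X}|f(x)|$; for $U\subset X$ clopen, $1_U$ is its characteristic function. $\mathrm{CO}(X)$ denotes the set of clopen (closed and open) subsets of $X$. An ultrafiltre of $\mathrm{CO}(X)$ is a subset $\mathscr F\subset \mathrm{CO}(X)$ with: $\emptyset\notin\mathscr F$; $U\cap V\in\mathscr F$ for $U,V\in\mathscr F$; $U\cup V\in\mathscr F$ for $U\in \mathrm{CO}(X)$, $V\in\mathscr F$; and for every $U\in\mathrm{CO}(X)$, $U\in\mathscr F$ or $X\setminus U\in\mathscr F$. $\mathrm{UF}(X)$ is the set of such ultrafiltres with the topology having as basis the sets $\{\mathscr F\in\mathrm{UF}(X): U\in\mathscr F\}$, $U\in\mathrm{CO}(X)$. $\mathrm{BSC}_k(X)$ is the Berkovich spectrum $\mathcal M_k(C_{bd}(X,k))$: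 the set of multiplicative seminorms $f\mapsto |f|_x$ on $C_{bd}(X,k)$ (so $|fg|_x=|f|_x|g|_x$, $|1|_x=1$, $|f+g|_x\le\max(|f|_x,|g|_x)$, $|af|_x=|a||f|_x$ for $a\in k$) that are bounded ($|f|_x\le\|f\|$), with the weakest topology making all maps $x\mapsto|f|_x$ continuous; it is compact Hausdorff. *)

(* Defs.v *)
From HB Require Import structures.
From mathcomp Require Import all_boot all_algebra.
From Stdlib Require Import Reals Rtopology.

Set Implicit Arguments.
Unset Strict Implicit.
Unset Printing Implicit Defensive.

Local Open Scope R_scope.

Definition is_topology {X : Type} (O : (X -> Prop) -> Prop) : Prop :=
  O (fun _ => True) /\
  (forall U V, O U -> O V -> O (fun x => U x /\ V x)) /\
  (forall F : (X -> Prop) -> Prop, (forall U, F U -> O U) ->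
      O (fun x => exists U, F U /\ U x)).

Definition generated_topology {X : Type} (S : (X -> Prop) -> Prop)
  (U : X -> Prop) : Prop :=
  forall O : (X -> Prop) -> Prop, is_topology O -> (forall V, S V -> O V) -> O U.

Definition continuous {A B : Type} (OA : (A -> Prop) -> Prop)
  (OB : (B -> Prop) -> Prop) (f : A -> B) : Prop :=
  forall V, OB V -> OA (fun x => V (f x)).

Definition homeomorphism {A B : Type} (OA : (A -> Prop) -> Prop)
  (OB : (B -> Prop) -> Prop) (f : A -> B) : Prop :=
  exists g : B -> A,
    (forall x, g (f x) = x) /\ (forall y, f (g y) = y) /\
    continuous OA OB f /\ continuous OB OA g.

Definition clopen {X : Type} (OX : (X -> Prop) -> Prop) (U : X -> Prop) : Prop :=
  OX U /\ OX (fun x => ~ U x).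

Definition nonarch_abs (k : fieldType) (a : k -> R) : Prop :=
  (forall x, 0 <= a x) /\
  (forall x, a x = 0 <-> x = (GRing.zero : k)) /\
  (forall x y, a (GRing.mul x y) = a x * a y) /\
  (forall x y, a (GRing.add x y) <= Rmax (a x) (a y)).

Definition abs_complete (k : fieldType) (a : k -> R) : Prop :=
  forall u : nat -> k,
    (forall eps, 0 < eps -> exists N : nat, forall m n : nat,
        le N m -> le N n -> a (GRing.add (u m) (GRing.opp (u n))) < eps) ->
    exists l : k, forall eps, 0 < eps -> exists N : nat, forall n : nat,
        le N n -> a (GRing.add (u n) (GRing.opp l)) < eps.

Definition k_open (k : fieldType) (a : k -> R) (V : k -> Prop) : Prop :=
  forall y, V y -> exists eps, 0 < eps /\
     forall z, a (GRing.add z (GRing.opp y)) < eps -> V z.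

Definition is_cbd {X : Type} (OX : (X -> Prop) -> Prop) (k : fieldType)
  (a : k -> R) (f : X -> k) : Prop :=
  continuous OX (k_open a) f /\ (exists M, forall x, a (f x) <= M).

Definition Cbd {X : Type} (OX : (X -> Prop) -> Prop) (k : fieldType)
  (a : k -> R) : Type := {f : X -> k | is_cbd OX a f}.

(* The algebra
   operations of C_bd(X,k) are pointwise; they are expressed relationally
   ("h is the pointwise product of f and g").  Boundedness |f|_x <= ||f||
   is expressed as: |f|_x <= M for every bound M of |f| on X, i.e.
   |f|_x <= sup_x |f(x)|. *)
Definition is_bmult_seminorm {X : Type} (OX : (X -> Prop) -> Prop)
  (k : fieldType) (a : k -> R) (s : Cbd OX a -> R) : Prop :=
  (forall f, 0 <= s f) /\
  (forall f g h : Cbd OX a,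
      (forall x, proj1_sig h x = GRing.mul (proj1_sig f x) (proj1_sig g x)) ->
      s h = s f * s g) /\
  (forall h : Cbd OX a, (forall x, proj1_sig h x = (GRing.one k)) -> s h = 1) /\
  (forall f g h : Cbd OX a,
      (forall x, proj1_sig h x = GRing.add (proj1_sig f x) (proj1_sig g x)) ->
      s h <= Rmax (s f) (s g)) /\
  (forall (c : k) (f h : Cbd OX a),
      (forall x, proj1_sig h x = GRing.mul c (proj1_sig f x)) ->
      s h = a c * s f) /\
  (forall (f : Cbd OX a) (M : R),
      (forall x, a (proj1_sig f x) <= M) -> s f <= M).

Definition BSC {X : Type} (OX : (X -> Prop) -> Prop) (k : fieldType)
  (a : k -> R) : Type := {s : Cbd OX a -> R | is_bmult_seminorm s}.

Definition BSC_open {X : Type} (OX : (X -> Prop) -> Prop) (k : fieldType)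
  (a : k -> R) : (BSC OX a -> Prop) -> Prop :=
  generated_topology
    (fun W : BSC OX a -> Prop => exists (f : Cbd OX a) (V : R -> Prop),
        open_set V /\ forall p, W p <-> V (proj1_sig p f)).

Definition is_ideal {X : Type} (OX : (X -> Prop) -> Prop) (k : fieldType)
  (a : k -> R) (I : Cbd OX a -> Prop) : Prop :=
  (forall h : Cbd OX a, (forall x, proj1_sig h x = (GRing.zero : k)) -> I h) /\
  (forall f h : Cbd OX a,
      (forall x, proj1_sig h x = GRing.opp (proj1_sig f x)) -> I f -> I h) /\
  (forall f g h : Cbd OX a,
      (forall x, proj1_sig h x = GRing.add (proj1_sig f x) (proj1_sig g x)) ->
      I f -> I g -> I h) /\
  (forall f g h : Cbd OX a,
      (forall x, proj1_sig h x = GRing.mul (proj1_sig g x) (proj1_sig f x)) ->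
      I f -> I h).

Definition is_maximal_ideal {X : Type} (OX : (X -> Prop) -> Prop)
  (k : fieldType) (a : k -> R) (I : Cbd OX a -> Prop) : Prop :=
  is_ideal I /\ (exists f, ~ I f) /\
  (forall J : Cbd OX a -> Prop, is_ideal J -> (forall f, I f -> J f) ->
      (forall f, J f <-> I f) \/ (forall f, J f)).

Definition supp {X : Type} {OX : (X -> Prop) -> Prop} {k : fieldType}
  {a : k -> R} (p : BSC OX a) : Cbd OX a -> Prop :=
  fun f => proj1_sig p f = 0.

Definition is_indicator {X : Type} {OX : (X -> Prop) -> Prop} {k : fieldType}
  {a : k -> R} (U : X -> Prop) (h : Cbd OX a) : Prop :=
  forall x, (U x -> proj1_sig h x = (GRing.one k)) /\
            (~ U x -> proj1_sig h x = (GRing.zero : k)).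

Definition F_supp {X : Type} {OX : (X -> Prop) -> Prop} {k : fieldType}
  {a : k -> R} (p : BSC OX a) (U : X -> Prop) : Prop :=
  clopen OX U /\
  exists h : Cbd OX a, is_indicator U h /\ ~ supp p h.

Definition is_UF {X : Type} (OX : (X -> Prop) -> Prop)
  (F : (X -> Prop) -> Prop) : Prop :=
  (forall U, F U -> clopen OX U) /\
  ~ F (fun _ => False) /\
  (forall U V, F U -> F V -> F (fun x => U x /\ V x)) /\
  (forall U V, clopen OX U -> F V -> F (fun x => U x \/ V x)) /\
  (forall U, clopen OX U -> F U \/ F (fun x => ~ U x)).

Definition UF {X : Type} (OX : (X -> Prop) -> Prop) : Type :=
  {F : (X -> Prop) -> Prop | is_UF OX F}.

Definition UF_open {X : Type} (OX : (X -> Prop) -> Prop)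
  (W : UF OX -> Prop) : Prop :=
  forall F, W F -> exists U, clopen OX U /\ proj1_sig F U /\
     forall G : UF OX, proj1_sig G U -> W G.

(* Main.v *)
Set Warnings "-notation-overridden,-ambiguous-paths".
Require Import Defs.
From HB Require Import structures.
From mathcomp Require Import all_boot all_algebra.
From Stdlib Require Import Reals Rtopology.
From Stdlib Require Import Lra Classical ClassicalEpsilon FunctionalExtensionality PropExtensionality ProofIrrelevance.
Import GRing.Theory.
Set Implicit Arguments.
Unset Strict Implicit.
Local Open Scope R_scope.

Lemma set_ext {T : Type} (P Q : T -> Prop) : (forall x, P x <-> Q x) -> P = Q.
Proof. move=> H; apply: functional_extensionality => x; apply: propositional_extensionality; exact: H. Qed.

Lemma Rmax_le_iff x y z : Rmax x y <= z <-> x <= z /\ y <= z.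
Proof. unfold Rmax; destruct (Rle_dec x y); split; intuition lra. Qed.

Lemma Rmax_cases x y : (Rmax x y = x /\ y <= x) \/ (Rmax x y = y /\ x <= y).
Proof. unfold Rmax; destruct (Rle_dec x y); [right|left]; split; auto; lra. Qed.

Ltac aset a :=
 repeat match goal with
 | H : context [a ?x] |- _ => let w := fresh "w" in set w := a x in H
 | |- context [a ?x] => let w := fresh "w" in set w := a x
 end;
 repeat match goal with
 | w1 := a ?x, w2 := a ?y |- _ => assert (w1 = w2) by reflexivity; clearbody w2; subst w2
 end.

Ltac alra a := aset a; first [lra | nra].

Section Abs.
Context (k : fieldType) (a : k -> R) (Ha : nonarch_abs a).

Lemma a_ge0 x : 0 <= a x. Proof. by case: Ha. Qed.
Lemma a_eq0 x : a x = 0 <-> x = GRing.zero. Proof. by case: Ha => _ []. Qed.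
Lemma a_mul x y : a (GRing.mul x y) = a x * a y. Proof. by case: Ha => _ [] _ []. Qed.
Lemma a_add x y : a (GRing.add x y) <= Rmax (a x) (a y). Proof. by case: Ha => _ [] _ []. Qed.
Lemma a0 : a GRing.zero = 0. Proof. by apply/a_eq0. Qed.
Lemma a_neq0 x : x <> GRing.zero -> 0 < a x.
Proof. move=> H; have := a_ge0 x; have: a x <> 0 by move/a_eq0. lra. Qed.
Lemma a1 : a (GRing.one k) = 1.
Proof.
have h1 : a (GRing.one k) = a (GRing.one k) * a (GRing.one k) by rewrite -a_mul mulr1.
have h2 : 0 < a (GRing.one k) by apply: a_neq0; apply/eqP; exact: oner_neq0.
nra.
Qed.
Lemma aN x : a (GRing.opp x) = a x.
Proof.
have h1 : a (GRing.opp (GRing.one k)) * a (GRing.opp (GRing.one k)) = 1 by rewrite -a_mul mulrNN mulr1 a1.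
have h2 := a_ge0 (GRing.opp (GRing.one k)).
have h3 : a (GRing.opp (GRing.one k)) = 1 by nra.
by rewrite -mulN1r a_mul h3 Rmult_1_l.
Qed.
Lemma a_sym x y : a (GRing.add x (GRing.opp y)) = a (GRing.add y (GRing.opp x)).
Proof. by rewrite -aN opprB. Qed.
Lemma a_ultra_eq u v : a u < a v -> a (GRing.add u v) = a v.
Proof.
move=> H; have h1 := a_add u v.
have h2 := a_add (GRing.opp u) (GRing.add u v).
rewrite addKr aN in h2.

case: (Rmax_cases (a u) (a v)) h1 => [[-> ?]|[-> ?]] h1; try lra.
case: (Rmax_cases (a u) (a (GRing.add u v))) h2 => [[-> ?]|[-> ?]] h2; lra.
Qed.
Lemma a_inv x : x <> GRing.zero -> a (GRing.inv x) = / a x.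
Proof.
move=> H; have hx := a_neq0 H.
have : a (GRing.mul x (GRing.inv x)) = 1 by rewrite mulfV ?a1 //; apply/eqP.
rewrite a_mul => h; field_simplify_eq; [lra | lra].
Qed.
End Abs.

Section Topo.
Context (X : Type) (OX : (X -> Prop) -> Prop) (HX : is_topology OX).

Lemma open_local (P : X -> Prop) :
  (forall x, P x -> exists Q, OX Q /\ Q x /\ forall z, Q z -> P z) -> OX P.
Proof.
move=> H.
have HU := (proj2 (proj2 HX)) (fun Q => OX Q /\ forall z, Q z -> P z) (fun U h => proj1 h).
have -> : P = (fun x => exists U, (OX U /\ forall z, U z -> P z) /\ U x).
  apply: set_ext => x; split.
  - move=> Px; case: (H x Px) => Q [HQ [Qx HQP]]; exists Q; tauto.
  - move=> [U [[_ hU] Ux]]; exact: hU.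
exact HU.
Qed.

Lemma open_full : OX (fun _ => True). Proof. by case: HX. Qed.
Lemma open_inter U V : OX U -> OX V -> OX (fun x => U x /\ V x).
Proof. case: HX => _ [h _]; exact: h. Qed.

Lemma clopen_compl U : clopen OX U -> clopen OX (fun x => ~ U x).
Proof.
move=> H; split; first exact: (proj2 H).
apply: open_local => x hx; exists U; split; first exact: (proj1 H).
split; first exact: (NNPP _ hx). tauto.
Qed.

Lemma clopen_inter U V : clopen OX U -> clopen OX V -> clopen OX (fun x => U x /\ V x).
Proof.
move=> hU hV; split; first exact: open_inter (proj1 hU) (proj1 hV).
apply: open_local => x hx; case: (classic (U x)) => hu.
- exists (fun x => ~ V x); split; first exact: (proj2 hV). split; tauto.
- exists (fun x => ~ U x); split; first exact: (proj2 hU). split; tauto.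
Qed.

Lemma clopen_union U V : clopen OX U -> clopen OX V -> clopen OX (fun x => U x \/ V x).
Proof.
move=> hU hV; split.
- apply: open_local => x [hx|hx].
  + exists U; split; first exact: (proj1 hU). split; tauto.
  + exists V; split; first exact: (proj1 hV). split; tauto.
- apply: open_local => x hx; exists (fun x => ~ U x /\ ~ V x); split.
  exact: open_inter (proj2 hU) (proj2 hV). split; tauto.
Qed.

Lemma clopen_full : clopen OX (fun _ => True).
Proof. split; first exact: open_full. apply: open_local => x hx; tauto. Qed.

Lemma clopen_empty : clopen OX (fun _ => False).
Proof.
split; first by apply: open_local.
apply: open_local => x _; exists (fun _ => True); split; first exact: open_full. tauto.
Qed.
End Topo.

Section KOpen.
Context (k : fieldType) (a : k -> R) (Ha : nonarch_abs a).

Lemma kopen_lt c : k_open a (fun y => a y < c).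
Proof.
move=> y hy; exists (c - a y); split; first lra. move=> z hz.
have e : z = GRing.add (GRing.add z (GRing.opp y)) y by rewrite subrK.
have := a_ge0 Ha y.
rewrite e; have := a_add Ha (GRing.add z (GRing.opp y)) y.
case: (Rmax_cases (a (GRing.add z (GRing.opp y))) (a y)) => [[-> hb]|[-> hb]] h1 h2.
- aset a; lra.
- aset a; lra.
Qed.

Lemma kopen_nlt c : 0 < c -> k_open a (fun y => ~ a y < c).
Proof.
move=> hc y hy; exists c; split => // z hz.
have e : z = GRing.add (GRing.add z (GRing.opp y)) y by rewrite subrK.
rewrite e (a_ultra_eq Ha) //; lra.
Qed.

Lemma kinv_id (y z : k) : y <> GRing.zero -> z <> GRing.zero ->
  GRing.add (GRing.inv z) (GRing.opp (GRing.inv y)) =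
  GRing.mul (GRing.add y (GRing.opp z)) (GRing.mul (GRing.inv z) (GRing.inv y)).
Proof.
move=> hy hz.
have hy' : y != GRing.zero by apply/eqP.
have hz' : z != GRing.zero by apply/eqP.
rewrite mulrDl mulrCA mulfV // mulr1 mulNr mulrA mulfV // mul1r //.
Qed.

Lemma kopen_inv V : k_open a V -> k_open a (fun y => y <> GRing.zero /\ V (GRing.inv y)).
Proof.
move=> hV y [hy Vy].
case: (hV _ Vy) => eps [heps Heps].
have ty := a_neq0 Ha hy.
exists (Rmin (a y) (eps * (a y * a y))); split.
  apply: Rmin_pos => //; apply: Rmult_lt_0_compat => //; exact: Rmult_lt_0_compat.
move=> z hz.
have hz1 : a (GRing.add z (GRing.opp y)) < a y by have h := Rmin_l (a y) (eps * (a y * a y)); alra a.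
have hz2 : a (GRing.add z (GRing.opp y)) < eps * (a y * a y) by have h := Rmin_r (a y) (eps * (a y * a y)); alra a.
have e : z = GRing.add (GRing.add z (GRing.opp y)) y by rewrite subrK.
have haz : a z = a y by rewrite e (a_ultra_eq Ha).
have hz0 : z <> GRing.zero by move=> h; have := proj2 (a_eq0 Ha z) h; alra a.
split => //; apply: Heps.
rewrite kinv_id // (a_mul Ha) (a_mul Ha) (a_inv Ha) // (a_inv Ha) // haz -(a_sym Ha).
set t := a y in ty hz2 *.
set q := a (GRing.add z (GRing.opp y)) in hz2 *.
have hq : q * (/ t * / t) * (t * t) = q by field; alra a.
have hq0 : 0 <= q by apply: a_ge0.
have ht : 0 < / t by apply: Rinv_0_lt_compat.
alra a.
Qed.
End KOpen.

Section Cbd.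
Context (X : Type) (OX : (X -> Prop) -> Prop) (HX : is_topology OX).
Context (k : fieldType) (a : k -> R) (Ha : nonarch_abs a).

Lemma cbd_ext (f g : Cbd OX a) : (forall x, proj1_sig f x = proj1_sig g x) -> f = g.
Proof.
case: f => f hf; case: g => g hg /= H.
have e : f = g := functional_extensionality _ _ H.
subst g; f_equal; apply: proof_irrelevance.
Qed.

Definition restrf (U : X -> Prop) (g : X -> k) : X -> k :=
  fun x => if excluded_middle_informative (U x) then g x else GRing.zero.

Lemma restr_cbd U g M : clopen OX U ->
  (forall V, k_open a V -> forall x, U x -> V (g x) ->
      exists Q, OX Q /\ Q x /\ forall z, Q z -> V (g z)) ->
  (forall x, U x -> a (g x) <= M) -> is_cbd OX a (restrf U g).
Proof.
move=> HU Hc Hb; split.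
- move=> V hV; apply: (open_local HX) => x; rewrite /restrf.
  destruct (excluded_middle_informative (U x)) as [hx|hx] => Vx.
  + case: (Hc V hV x hx Vx) => Q [hQ [Qx HQ]].
    exists (fun z => Q z /\ U z); split; first exact: (open_inter HX hQ (proj1 HU)).
    split; first tauto. move=> z [Qz Uz].
    destruct (excluded_middle_informative (U z)) as [h|h]; [exact: HQ | by []].
  + exists (fun z => ~ U z); split; first exact: (proj2 HU).
    split => // z hz; destruct (excluded_middle_informative (U z)) as [h|h]; by [].
- exists (Rmax M 0) => x; rewrite /restrf; destruct (excluded_middle_informative (U x)) as [hx|hx].
  + have h1 := Hb x hx; have h2 := Rmax_l M 0; alra a.
  + rewrite (a0 Ha); exact: Rmax_r.
Qed.

Lemma const_cbd c : is_cbd OX a (fun _ => c).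
Proof.
split.
- move=> V hV; apply: (open_local HX) => x Vc.
  exists (fun _ => True); split; first exact: (open_full HX). tauto.
- exists (a c) => x; lra.
Qed.

Definition cst c : Cbd OX a := exist _ _ (const_cbd c).

Lemma ind_ex U : clopen OX U -> exists h : Cbd OX a, is_indicator U h.
Proof.
move=> HU.
have Hc : forall V, k_open a V -> forall x, U x -> V (GRing.one k) ->
      exists Q, OX Q /\ Q x /\ forall z, Q z -> V ((fun _ => GRing.one k) z).
  move=> V _ x _ h; exists (fun _ => True); split; first exact: (open_full HX). tauto.
have Hb : forall x, U x -> a ((fun _ => GRing.one k) x) <= 1 by move=> x _; rewrite (a1 Ha); lra.
exists (exist _ _ (restr_cbd HU Hc Hb)) => x /=; rewrite /restrf.
by split => hx; destruct (excluded_middle_informative (U x)).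
Qed.

Lemma mulind_ex (f : Cbd OX a) U (h : Cbd OX a) : clopen OX U -> is_indicator U h ->
  exists r : Cbd OX a, forall x, proj1_sig r x = GRing.mul (proj1_sig f x) (proj1_sig h x).
Proof.
move=> HU Hh.
case: (proj2_sig f) => fc [M hM].
have Hc : forall V, k_open a V -> forall x, U x -> V (proj1_sig f x) ->
      exists Q, OX Q /\ Q x /\ forall z, Q z -> V (proj1_sig f z).
  move=> V hV x _ Vx; exists (fun z => V (proj1_sig f z)); split; first exact: fc. tauto.
have Hb : forall x, U x -> a (proj1_sig f x) <= M by move=> x _; exact: hM.
exists (exist _ _ (restr_cbd HU Hc Hb)) => x /=; rewrite /restrf.
case: (Hh x) => h1 h2.
destruct (excluded_middle_informative (U x)) as [hx|hx].
- by rewrite h1 // mulr1.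
- by rewrite h2 // mulr0.
Qed.

Lemma inv_ex (f : Cbd OX a) U (h : Cbd OX a) c : clopen OX U -> is_indicator U h -> 0 < c ->
  (forall x, U x -> c <= a (proj1_sig f x)) ->
  exists r : Cbd OX a, (forall x, a (proj1_sig r x) <= / c) /\
    forall x, proj1_sig h x = GRing.mul (proj1_sig r x) (proj1_sig f x).
Proof.
move=> HU Hh hc Hf.
case: (proj2_sig f) => fc _.
have fnz : forall x, U x -> proj1_sig f x <> GRing.zero.
  move=> x hx e; have := Hf x hx; rewrite e (a0 Ha); lra.
have Hc : forall V, k_open a V -> forall x, U x -> V ((fun x => GRing.inv (proj1_sig f x)) x) ->
      exists Q, OX Q /\ Q x /\ forall z, Q z -> V ((fun x => GRing.inv (proj1_sig f x)) z).
  move=> V hV x hx Vx.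
  exists (fun z => (fun y => y <> GRing.zero /\ V (GRing.inv y)) (proj1_sig f z)); split.
  + apply: (fc (fun y => y <> GRing.zero /\ V (GRing.inv y))); exact: (kopen_inv Ha hV).
  + split; first by split => //; exact: fnz. by move=> z [].
have Hb : forall x, U x -> a ((fun x => GRing.inv (proj1_sig f x)) x) <= / c.
  move=> x hx /=; rewrite (a_inv Ha); last exact: fnz.
  apply: Rinv_le_contravar => //; exact: Hf.
exists (exist _ _ (restr_cbd HU Hc Hb)); split => x /=; rewrite /restrf.
- destruct (excluded_middle_informative (U x)) as [hx|hx]; first exact: Hb.
  rewrite (a0 Ha); left; exact: Rinv_0_lt_compat.
- case: (Hh x) => h1 h2.
  destruct (excluded_middle_informative (U x)) as [hx|hx].
  + rewrite h1 // mulVf //; apply/eqP; exact: fnz.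
  + by rewrite h2 // mul0r.
Qed.
End Cbd.

Section Semi.
Context (X : Type) (OX : (X -> Prop) -> Prop) (HX : is_topology OX).
Context (k : fieldType) (a : k -> R) (Ha : nonarch_abs a).
Context (s : Cbd OX a -> R) (Hs : is_bmult_seminorm s).

Lemma s_ge0 f : 0 <= s f. Proof. by case: Hs. Qed.
Lemma s_mul (f g h : Cbd OX a) :
  (forall x, proj1_sig h x = GRing.mul (proj1_sig f x) (proj1_sig g x)) -> s h = s f * s g.
Proof. case: Hs => _ [H _]; exact: H. Qed.
Lemma s_one (h : Cbd OX a) : (forall x, proj1_sig h x = GRing.one k) -> s h = 1.
Proof. case: Hs => _ [_ [H _]]; exact: H. Qed.
Lemma s_add (f g h : Cbd OX a) :
  (forall x, proj1_sig h x = GRing.add (proj1_sig f x) (proj1_sig g x)) -> s h <= Rmax (s f) (s g).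
Proof. case: Hs => _ [_ [_ [H _]]]; exact: H. Qed.
Lemma s_scal c (f h : Cbd OX a) :
  (forall x, proj1_sig h x = GRing.mul c (proj1_sig f x)) -> s h = a c * s f.
Proof. case: Hs => _ [_ [_ [_ [H _]]]]; exact: H. Qed.
Lemma s_bnd (f : Cbd OX a) M : (forall x, a (proj1_sig f x) <= M) -> s f <= M.
Proof. case: Hs => _ [_ [_ [_ [_ H]]]]; exact: H. Qed.

Lemma s_zero (h : Cbd OX a) : (forall x, proj1_sig h x = GRing.zero) -> s h = 0.
Proof.
move=> H; rewrite (s_scal (c := GRing.zero) (f := h)) ?(a0 Ha) ?Rmult_0_l // => x.
by rewrite H mul0r.
Qed.

Lemma s_ind01 U (h : Cbd OX a) : is_indicator U h -> s h = 0 \/ s h = 1.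
Proof.
move=> Hh; have e : s h = s h * s h.
  apply: s_mul => x; case: (Hh x) => h1 h2; case: (classic (U x)) => hx.
  - by rewrite h1 // mulr1.
  - by rewrite h2 // mulr0.
have := s_ge0 h; nra.
Qed.

Lemma s_L1 U (hU hV : Cbd OX a) : is_indicator U hU -> is_indicator (fun x => ~ U x) hV ->
  (s hU = 1 /\ s hV = 0) \/ (s hU = 0 /\ s hV = 1).
Proof.
move=> HU HV.
have e0 : s (cst HX a GRing.zero) = s hU * s hV.
  apply: s_mul => x /=; case: (HU x) => h1 h2; case: (HV x) => h3 h4.
  case: (classic (U x)) => hx.
  - by rewrite h4 // mulr0.
  - by rewrite h2 // mul0r.
have e0' : s (cst HX a GRing.zero) = 0 by apply: s_zero.
have e1 : s (cst HX a (GRing.one k)) <= Rmax (s hU) (s hV).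
  apply: s_add => x /=; case: (HU x) => h1 h2; case: (HV x) => h3 h4.
  case: (classic (U x)) => hx.
  - by rewrite h1 // h4 // addr0.
  - by rewrite h2 // h3 // add0r.
have e1' : s (cst HX a (GRing.one k)) = 1 by apply: s_one.
rewrite e0' in e0; rewrite e1' in e1.
case: (s_ind01 HU) => e2; case: (s_ind01 HV) => e3; rewrite e2 e3 in e0 e1 *.
- unfold Rmax in e1; destruct Rle_dec; lra.
- by right.
- by left.
- lra.
Qed.

Lemma s_ind_nonempty U (h : Cbd OX a) : is_indicator U h -> s h <> 0 -> exists x, U x.
Proof.
move=> Hh hs; apply: NNPP => hne; apply: hs; apply: s_zero => x.
case: (Hh x) => _ h2; apply: h2 => hx; apply: hne; by exists x.
Qed.

Lemma s_le_on U (h f : Cbd OX a) M : clopen OX U -> is_indicator U h -> s h <> 0 ->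
  (forall x, U x -> a (proj1_sig f x) <= M) -> s f <= M.
Proof.
move=> HU Hh hs Hf.
have h1 : s h = 1 by case: (s_ind01 Hh) => //.
case: (s_ind_nonempty Hh hs) => x0 hx0.
have M0 : 0 <= M by have := Hf x0 hx0; have := a_ge0 Ha (proj1_sig f x0); lra.
case: (mulind_ex HX Ha f HU Hh) => r Hr.
have e := s_mul Hr; rewrite h1 Rmult_1_r in e.
rewrite -e; apply: s_bnd => x; rewrite Hr.
case: (Hh x) => g1 g2; case: (classic (U x)) => hx.
- rewrite g1 // mulr1; exact: Hf.
- rewrite g2 // mulr0 (a0 Ha) //.
Qed.

Lemma s_ge_on U (h f : Cbd OX a) c : clopen OX U -> is_indicator U h -> s h <> 0 -> 0 < c ->
  (forall x, U x -> c <= a (proj1_sig f x)) -> c <= s f.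
Proof.
move=> HU Hh hs hc Hf.
have h1 : s h = 1 by case: (s_ind01 Hh) => //.
case: (inv_ex HX Ha HU Hh hc Hf) => r [Hb Hr].
have e := s_mul Hr; rewrite h1 in e.
have hr : s r <= / c by apply: s_bnd.
have hcr : c * s r <= 1.
  have := Rmult_le_compat_l c _ _ (Rlt_le _ _ hc) hr; rewrite Rinv_r; lra.
have := s_ge0 r; have := s_ge0 f; nra.
Qed.
End Semi.

Section Phi.
Context (X : Type) (OX : (X -> Prop) -> Prop) (HX : is_topology OX).
Context (k : fieldType) (a : k -> R) (Ha : nonarch_abs a).

Lemma clopen_lt (f : Cbd OX a) c : 0 < c -> clopen OX (fun x => a (proj1_sig f x) < c).
Proof.
move=> hc; case: (proj2_sig f) => fc _; split.
- exact: (fc (fun y => a y < c) (@kopen_lt _ _ Ha c)).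
- exact: (fc (fun y => ~ a y < c) (kopen_nlt Ha hc)).
Qed.

Lemma ind_unique U (h h' : Cbd OX a) : is_indicator U h -> is_indicator U h' -> h = h'.
Proof.
move=> H H'; apply: cbd_ext => x; case: (H x) => h1 h2; case: (H' x) => h3 h4.
case: (classic (U x)) => hx; [by rewrite h1 // h3 | by rewrite h2 // h4].
Qed.

Lemma Fs_iff (p : BSC OX a) U (h : Cbd OX a) : is_indicator U h ->
  (F_supp p U <-> clopen OX U /\ proj1_sig p h <> 0).
Proof.
move=> Hh; split.
- move=> [hU [h' [Hh' hs]]]; split => //; by rewrite (ind_unique Hh Hh').
- move=> [hU hs]; split => //; by exists h.
Qed.

Lemma Phi_UF (p : BSC OX a) : is_UF OX (F_supp p).
Proof.
case: p => s Hs /=.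
have Fs : forall U h, is_indicator U h -> (F_supp (exist _ s Hs) U <-> clopen OX U /\ s h <> 0).
  move=> U h Hh; exact: (Fs_iff (exist _ s Hs) Hh).
split; first by move=> U [].
split.
  case: (ind_ex HX Ha (clopen_empty HX)) => h Hh.
  rewrite (Fs _ _ Hh) => [[_ hs]]; apply: hs; apply: (s_zero Ha Hs) => x.
  by case: (Hh x) => _ ->.
split.
  move=> U V; case: (ind_ex HX Ha (clopen_full HX)) => _ _.
  move=> [cU [hU [HU sU]]] [cV [hV [HV sV]]].
  have cW := clopen_inter HX cU cV.
  case: (ind_ex HX Ha cW) => hW HW.
  rewrite (Fs _ _ HW); split => //.
  have -> : s hW = s hU * s hV.
    apply: (s_mul Hs) => x; case: (HU x) => h1 h2; case: (HV x) => h3 h4; case: (HW x) => h5 h6.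
    case: (classic (U x)) => hx; case: (classic (V x)) => hy.
    + by rewrite h5 // h1 // h3 // mulr1.
    + by rewrite h6; [rewrite h4 // mulr0 | tauto].
    + by rewrite h6; [rewrite h2 // mul0r | tauto].
    + by rewrite h6; [rewrite h2 // mul0r | tauto].
  case: (s_ind01 Hs HU) => e1 //; case: (s_ind01 Hs HV) => e2 //; rewrite e1 e2; lra.
split.
  move=> U V cU [cV [hV [HV sV]]].
  have cW := clopen_union HX cU cV.
  case: (ind_ex HX Ha cW) => hW HW.
  rewrite (Fs _ _ HW); split => //.
  have e : s hV = s hW * s hV.
    apply: (s_mul Hs) => x; case: (HV x) => h3 h4; case: (HW x) => h5 h6.
    case: (classic (V x)) => hy.
    + by rewrite h3 // h5 ?mulr1 //; right.
    + by rewrite h4 // mulr0.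
  move=> e0; rewrite e0 Rmult_0_l in e; exact: sV.
move=> U cU.
case: (ind_ex HX Ha cU) => hU HU.
case: (ind_ex HX Ha (clopen_compl HX cU)) => hV HV.
rewrite (Fs _ _ HU) (Fs _ _ HV).
case: (s_L1 HX Ha Hs HU HV) => [[-> _]|[_ ->]]; [left|right]; split; try lra.
  exact: cU.
exact: (clopen_compl HX cU).
Qed.

Lemma supp_max (p : BSC OX a) : is_maximal_ideal (supp p).
Proof.
case: p => s Hs; rewrite /supp /=.
have Hid : forall I : Cbd OX a -> Prop, is_ideal I -> I (cst HX a (GRing.one k)) -> forall f, I f.
  move=> I [_ [_ [_ Imul]]] I1 f; apply: (Imul (cst HX a (GRing.one k)) f f) => // x /=.
  by rewrite mulr1.
split.
  split; first by move=> h H; apply: (s_zero Ha Hs).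
  split.
    move=> f h H hf; rewrite (s_scal Hs (c := GRing.opp (GRing.one k)) (f := f)); first by rewrite hf; lra.
    by move=> x; rewrite H mulN1r.
  split.
    move=> f g h H hf hg; have := s_add Hs H; rewrite hf hg; have := s_ge0 Hs h.
    unfold Rmax; destruct Rle_dec; lra.
  move=> f g h H hf; rewrite (s_mul Hs H) hf; lra.
split.
  exists (cst HX a (GRing.one k)); rewrite (s_one Hs) //; lra.
move=> J HJ Hinc.
case: (classic (exists g, J g /\ s g <> 0)) => [[g [Jg sg]]|hno]; last first.
  left => f; split; last exact: Hinc.
  move=> Jf; apply: NNPP => hf; apply: hno; by exists f.
right; apply: Hid => //.
have sg0 : 0 < s g by have := s_ge0 Hs g; lra.
set c := s g / 2.
have hc : 0 < c by rewrite /c; lra.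
have cW := clopen_lt g hc.
case: (ind_ex HX Ha cW) => hW HW.
case: (ind_ex HX Ha (clopen_compl HX cW)) => hN HN.
have sW : s hW = 0.
  case: (s_L1 HX Ha Hs HW HN) => [[e _]|[e _]] //.
  have : s g <= c.
    apply: (s_le_on HX Ha Hs (U := fun x => a (proj1_sig g x) < c) cW HW); first lra.
    move=> x hx; lra.
  rewrite /c; lra.
have Hge : forall x, ~ a (proj1_sig g x) < c -> c <= a (proj1_sig g x).
  move=> x hx; lra.
case: (inv_ex HX Ha (clopen_compl HX cW) HN hc Hge) => r [_ Hr].
case: HJ => [J0 [Jneg [Jadd Jmul]]].
have JN : J hN by apply: (Jmul g r hN Hr Jg).
have JW : J hW by apply: Hinc.
apply: (Jadd hW hN) => // x /=.
case: (HW x) => h1 h2; case: (HN x) => h3 h4.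
case: (classic (a (proj1_sig g x) < c)) => hx.
- by rewrite h1 // h4 // addr0.
- by rewrite h2 // h3 // add0r.
Qed.
End Phi.

Lemma le_div_r (c y z : R) : 0 < y -> c * y <= z -> c <= z / y.
Proof.
move=> hy h; apply: (Rmult_le_reg_r y) => //.
rewrite /Rdiv Rmult_assoc Rinv_l; lra.
Qed.

Lemma div_le (c y z : R) : 0 < y -> z <= c * y -> z / y <= c.
Proof.
move=> hy h; apply: (Rmult_le_reg_r y) => //.
rewrite /Rdiv Rmult_assoc Rinv_l; lra.
Qed.

Lemma lim_le (x z : R) : 0 < x -> (forall c, 0 < c -> c < x -> c <= z) -> x <= z.
Proof.
move=> hx H; apply: Rnot_lt_le => hz.
set c := (Rmax z 0 + x) / 2.
have hm1 := Rmax_l z 0; have hm2 := Rmax_r z 0.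
have hmx : Rmax z 0 < x by unfold Rmax; destruct Rle_dec; lra.
have := H c; rewrite /c; lra.
Qed.

Section SF.
Context (X : Type) (OX : (X -> Prop) -> Prop) (HX : is_topology OX).
Context (k : fieldType) (a : k -> R) (Ha : nonarch_abs a).
Context (Fp : (X -> Prop) -> Prop) (HF : is_UF OX Fp).

Lemma UF_clopen U : Fp U -> clopen OX U. Proof. by case: HF => H _; exact: H. Qed.
Lemma UF_ne U : Fp U -> exists x, U x.
Proof.
move=> hU; apply: NNPP => hn.
have e : U = (fun _ => False) by apply: set_ext => x; split => // hx; apply: hn; by exists x.
case: HF => _ [H _]; apply: H; by rewrite -e.
Qed.
Lemma UF_inter U V : Fp U -> Fp V -> Fp (fun x => U x /\ V x).
Proof. case: HF => _ [_ [H _]]; exact: H. Qed.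
Lemma UF_dich U : clopen OX U -> Fp U \/ Fp (fun x => ~ U x).
Proof. case: HF => _ [_ [_ [_ H]]]; exact: H. Qed.
Lemma UF_up A B : Fp A -> clopen OX B -> (forall x, A x -> B x) -> Fp B.
Proof.
move=> hA cB hAB; case: (UF_dich cB) => // hB.
case: (UF_ne (UF_inter hA hB)) => x [h1 h2]; case: h2; exact: hAB.
Qed.
Lemma UF_full : Fp (fun _ => True).
Proof.
case: (UF_dich (clopen_empty HX)) => h.
  case: HF => _ [H _]; by case: H.
apply: (UF_up h (clopen_full HX)) => //.
Qed.

Definition Eset (f : Cbd OX a) M := exists U, Fp U /\ forall x, U x -> a (proj1_sig f x) <= M.
Definition Lset (f : Cbd OX a) y := forall M, Eset f M -> y <= M.

Lemma E_ne f : exists M, Eset f M.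
Proof.
case: (proj2_sig f) => _ [M hM]; exists M, (fun _ => True); split; first exact: UF_full.
move=> x _; exact: hM.
Qed.
Lemma E_ge0 f M : Eset f M -> 0 <= M.
Proof.
move=> [U [hU H]]; case: (UF_ne hU) => x hx; have := H x hx; have := a_ge0 Ha (proj1_sig f x); lra.
Qed.
Lemma L_bound f : bound (Lset f).
Proof. case: (E_ne f) => M hM; exists M => y hy; exact: hy. Qed.
Lemma L_ne f : exists y, Lset f y.
Proof. exists 0 => M hM; exact: E_ge0 hM. Qed.

Definition sF (f : Cbd OX a) : R := proj1_sig (completeness (Lset f) (L_bound f) (L_ne f)).
Lemma sF_lub f : is_lub (Lset f) (sF f). Proof. exact: proj2_sig. Qed.
Lemma G1 f M : Eset f M -> sF f <= M.
Proof. move=> hM; apply: (proj2 (sF_lub f)) => y hy; exact: hy. Qed.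
Lemma G2 f y : Lset f y -> y <= sF f.
Proof. move=> hy; exact: (proj1 (sF_lub f)). Qed.
Lemma G4 f y : sF f < y -> exists M, Eset f M /\ M < y.
Proof.
move=> hy; apply: NNPP => hn.
have : y <= sF f.
  apply: G2 => M hM; apply: Rnot_lt_le => hM'; apply: hn; by exists M.
lra.
Qed.
Lemma sF_ge0 f : 0 <= sF f.
Proof. apply: G2 => M hM; exact: E_ge0 hM. Qed.
Lemma K1 U f c : Fp U -> (forall x, U x -> c <= a (proj1_sig f x)) -> c <= sF f.
Proof.
move=> hU H; apply: G2 => M [U' [hU' H']].
case: (UF_ne (UF_inter hU hU')) => x [h1 h2].
have := H x h1; have := H' x h2; lra.
Qed.
Lemma K3 f c : 0 < c -> c < sF f -> Fp (fun x => ~ a (proj1_sig f x) < c).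
Proof.
move=> hc hcf; case: (UF_dich (clopen_lt Ha f hc)) => // h.
have : sF f <= c.
  apply: G1; exists (fun x => a (proj1_sig f x) < c); split => // x hx; lra.
lra.
Qed.

Lemma sF_semi : is_bmult_seminorm sF.
Proof.
split; first exact: sF_ge0.
split.
  move=> f g h H.
  have Hf0 := sF_ge0 f; have Hg0 := sF_ge0 g; have Hh0 := sF_ge0 h.
  have Hprod : forall M1 M2, Eset f M1 -> Eset g M2 -> sF h <= M1 * M2.
    move=> M1 M2 [U1 [hU1 H1]] [U2 [hU2 H2]]; apply: G1.
    exists (fun x => U1 x /\ U2 x); split; first exact: UF_inter.
    move=> x [x1 x2]; rewrite H (a_mul Ha).
    apply: Rmult_le_compat; [exact: a_ge0 | exact: a_ge0 | exact: H1 | exact: H2].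
  have Hone : forall M1, Eset f M1 -> sF h <= M1 * sF g.
    move=> M1 hM1; have := E_ge0 hM1; case => hM1p; last first.
      subst M1; rewrite Rmult_0_l; case: (E_ne g) => M2 hM2.
      have := Hprod 0 M2 hM1 hM2; lra.
    have : sF h / M1 <= sF g.
      apply: G2 => M2 hM2; apply: div_le => //; rewrite Rmult_comm; exact: Hprod.
    move=> hh; have := Rmult_le_compat_l M1 _ _ (Rlt_le _ _ hM1p) hh.
    have -> : M1 * (sF h / M1) = sF h by field; lra.
    done.
  apply: Rle_antisym.
  - case: Hg0 => hgp; last first.
      rewrite -hgp Rmult_0_r; case: (E_ne f) => M1 hM1; have h' := Hone M1 hM1; rewrite -hgp Rmult_0_r in h'; exact: h'.
    have : sF h / sF g <= sF f.
      apply: G2 => M1 hM1; apply: div_le => //; exact: Hone.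
    move=> hh; have := Rmult_le_compat_l (sF g) _ _ (Rlt_le _ _ hgp) hh.
    have -> : sF g * (sF h / sF g) = sF h by field; lra.
    lra.
  - case: Hf0 => hfp; last by rewrite -hfp Rmult_0_l.
    case: Hg0 => hgp; last by rewrite -hgp Rmult_0_r.
    have key : forall c1 c2, 0 < c1 -> c1 < sF f -> 0 < c2 -> c2 < sF g -> c1 * c2 <= sF h.
      move=> c1 c2 h1 h2 h3 h4.
      apply: (K1 (UF_inter (K3 h1 h2) (K3 h3 h4))) => x [x1 x2].
      rewrite H (a_mul Ha).
      apply: Rmult_le_compat; try lra; exact: Rnot_lt_le.
    have : sF f <= sF h / sF g.
      apply: lim_le => // c1 hc1 hc1'; apply: le_div_r => //.
      have : sF g <= sF h / c1.
        apply: lim_le => // c2 hc2 hc2'; apply: le_div_r => //.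
        rewrite Rmult_comm; exact: key.
      move=> hh; have := Rmult_le_compat_l c1 _ _ (Rlt_le _ _ hc1) hh.
      have -> : c1 * (sF h / c1) = sF h by field; lra.
      lra.
    move=> hh; have := Rmult_le_compat_l (sF g) _ _ (Rlt_le _ _ hgp) hh.
    have -> : sF g * (sF h / sF g) = sF h by field; lra.
    lra.
split.
  move=> h H; apply: Rle_antisym.
  - apply: G1; exists (fun _ => True); split; first exact: UF_full.
    move=> x _; rewrite H (a1 Ha); lra.
  - apply: (K1 UF_full) => x _; rewrite H (a1 Ha); lra.
split.
  move=> f g h H; apply: Rnot_lt_le => hlt.
  have hf : sF f < sF h by have := Rmax_l (sF f) (sF g); lra.
  have hg : sF g < sF h by have := Rmax_r (sF f) (sF g); lra.
  case: (G4 hf) => M1 [[U1 [hU1 H1]] hM1]; case: (G4 hg) => M2 [[U2 [hU2 H2]] hM2].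
  have : sF h <= Rmax M1 M2.
    apply: G1; exists (fun x => U1 x /\ U2 x); split; first exact: UF_inter.
    move=> x [x1 x2]; rewrite H.
    have e1 := a_add Ha (proj1_sig f x) (proj1_sig g x).
    have e2 := H1 x x1; have e3 := H2 x x2.
    have e4 := Rmax_l M1 M2; have e5 := Rmax_r M1 M2.
    case: (Rmax_cases (a (proj1_sig f x)) (a (proj1_sig g x))) e1 => [[-> e6]|[-> e6]] e1; alra a.
  unfold Rmax; destruct Rle_dec; lra.
split.
  move=> c f h H.
  case: (classic (c = GRing.zero)) => hc.
    subst c; rewrite (a0 Ha) Rmult_0_l; apply: Rle_antisym; last exact: sF_ge0.
    apply: G1; exists (fun _ => True); split; first exact: UF_full.
    move=> x _; rewrite H mul0r (a0 Ha); lra.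
  have hac := a_neq0 Ha hc.
  apply: Rle_antisym.
  - have : sF h / a c <= sF f.
      apply: G2 => M [U [hU HU]]; apply: div_le => //; rewrite Rmult_comm.
      apply: G1; exists U; split => // x hx; rewrite H (a_mul Ha).
      apply: Rmult_le_compat_l; [lra | exact: HU].
    move=> hh; have := Rmult_le_compat_l (a c) _ _ (Rlt_le _ _ hac) hh.
    have -> : a c * (sF h / a c) = sF h by field; lra.
    done.
  - apply: G2 => M [U [hU HU]].
    have : sF f <= M / a c.
      apply: G1; exists U; split => // x hx; apply: le_div_r => //.
      rewrite Rmult_comm -(a_mul Ha) -H; exact: HU.
    move=> hh; have := Rmult_le_compat_l (a c) _ _ (Rlt_le _ _ hac) hh.
    have -> : a c * (M / a c) = M by field; lra.
    done.
move=> f M H; apply: G1; exists (fun _ => True); split; first exact: UF_full.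
move=> x _; exact: H.
Qed.

Lemma sF_ind U (h : Cbd OX a) : is_indicator U h -> (Fp U <-> clopen OX U /\ sF h <> 0).
Proof.
move=> Hh; split.
- move=> hU; split; first exact: UF_clopen.
  have : 1 <= sF h.
    apply: (K1 hU) => x hx; case: (Hh x) => h1 _; rewrite h1 // (a1 Ha); lra.
  lra.
- move=> [cU hs]; case: (UF_dich cU) => // hN.
  exfalso; apply: hs; apply: Rle_antisym; last exact: sF_ge0.
  apply: G1; exists (fun x => ~ U x); split => // x hx.
  case: (Hh x) => _ h2; rewrite h2 // (a0 Ha); lra.
Qed.
End SF.

Lemma open_gt (c : R) : open_set (fun r => c < r).
Proof.
move=> x hx.
have hd : 0 < x - c by lra.
exists (mkposreal _ hd) => y; rewrite /disc /= => hy.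
have := Rabs_def2 _ _ hy; lra.
Qed.

Section Main.
Context (X : Type) (OX : (X -> Prop) -> Prop) (HX : is_topology OX).
Context (k : fieldType) (a : k -> R) (Ha : nonarch_abs a).

Definition PhiM (p : BSC OX a) : UF OX := exist _ (F_supp p) (Phi_UF HX Ha p).
Definition gM (F : UF OX) : BSC OX a :=
  exist _ (sF HX Ha (proj2_sig F)) (sF_semi HX Ha (proj2_sig F)).

Lemma BSC_ext (p q : BSC OX a) : (forall f, proj1_sig p f = proj1_sig q f) -> p = q.
Proof.
case: p => p hp; case: q => q hq /= H.
have e : p = q := functional_extensionality _ _ H.
subst q; f_equal; apply: proof_irrelevance.
Qed.

Lemma UF_ext (F G : UF OX) : (forall U, proj1_sig F U <-> proj1_sig G U) -> F = G.
Proof.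
case: F => F hF; case: G => G hG /= H.
have e : F = G by apply: set_ext.
subst G; f_equal; apply: proof_irrelevance.
Qed.

Lemma gPhi p : gM (PhiM p) = p.
Proof.
apply: BSC_ext => f.
case: p => s Hs /=.
set HF := Phi_UF HX Ha (exist _ s Hs).
apply: Rle_antisym.
- apply: Rnot_lt_le => hlt.
  have hs0 := s_ge0 Hs f.
  have ht0 := sF_ge0 HX Ha HF f.
  set t := sF HX Ha HF f in hlt ht0 *.
  set c := (s f + t) / 2.
  have hc : 0 < c by rewrite /c; lra.
  have cW := clopen_lt Ha f hc.
  case: (UF_dich HF cW) => hW.
  + have : t <= c.
      apply: G1; exists (fun x => a (proj1_sig f x) < c); split => // x hx; lra.
    rewrite /c; lra.
  + case: hW => _ [h [Hh hs]].
    have : c <= s f.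
      apply: (s_ge_on HX Ha Hs (clopen_compl HX cW) Hh hs hc) => x hx; lra.
    rewrite /c; lra.
- apply: G2 => M [U [hU HU]].
  case: hU => cU [h [Hh hs]].
  exact: (s_le_on HX Ha Hs cU Hh hs HU).
Qed.

Lemma Phig F : PhiM (gM F) = F.
Proof.
apply: UF_ext => U.
case: F => Fp HF /=; split.
- move=> [cU [h [Hh hs]]]; apply/(sF_ind HX Ha HF Hh); split => //.
- move=> hU; have cU := UF_clopen HF hU.
  case: (ind_ex HX Ha cU) => h Hh; split => //; exists h; split => //.
  exact: (proj2 ((sF_ind HX Ha HF Hh).1 hU)).
Qed.

Lemma Phi_cont : continuous (@BSC_open X OX k a) (@UF_open X OX) PhiM.
Proof.
move=> W hW O HO HS.
apply: (open_local HO) => p Wp.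
case: (hW _ Wp) => U [cU [hUp Hall]].
case: (ind_ex HX Ha cU) => h Hh.
exists (fun q : BSC OX a => (fun r => 1/2 < r) (proj1_sig q h)); split.
  apply: HS; exists h, (fun r => 1/2 < r); split => //; exact: open_gt.
split.
- case: ((Fs_iff p Hh).1 hUp) => _ hs.
  case: p hs {Wp hUp} => s Hs /= hs.
  case: (s_ind01 Hs Hh) => e; [by [] | rewrite e; lra].
- move=> q hq; apply: Hall => /=; apply/(Fs_iff q Hh); split => //=; lra.
Qed.

Lemma g_cont : continuous (@UF_open X OX) (@BSC_open X OX k a) gM.
Proof.
move=> V hV; apply: (hV (fun V' => UF_open (fun F => V' (gM F)))).
- split.
    move=> F _; exists (fun _ => True); split; first exact: clopen_full.
    split => //; exact: (UF_full HX (proj2_sig F)).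
  split.
    move=> A B hA hB F [hAF hBF].
    case: (hA F hAF) => U1 [c1 [F1 H1]]; case: (hB F hBF) => U2 [c2 [F2 H2]].
    exists (fun x => U1 x /\ U2 x); split; first exact: clopen_inter.
    split; first exact: (UF_inter (proj2_sig F) F1 F2).
    move=> G hG; split.
    + apply: H1; apply: (UF_up (proj2_sig G) hG c1); tauto.
    + apply: H2; apply: (UF_up (proj2_sig G) hG c2); tauto.
  move=> Fam HFam F [U0 [hU0 hF]].
  case: (HFam U0 hU0 F hF) => U [cU [FU HU]].
  exists U; split => //; split => // G hG; exists U0; split => //; exact: HU.
- move=> V' [f [V'' [hV'' HV']]] F hF.
  have hr := (HV' (gM F)).1 hF.
  case: F hF hr => Fp HF /= hF hr.
  set r := sF HX Ha HF f in hr.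
  have r0 : 0 <= r := sF_ge0 HX Ha HF f.
  case: (hV'' r hr) => [[d hd]] Hd /=.
  set c2 := r + d / 2.
  have hc2 : 0 < c2 by rewrite /c2; lra.
  have cl2 := clopen_lt Ha f hc2.
  have F2 : Fp (fun x => a (proj1_sig f x) < c2).
    case: (UF_dich HF cl2) => // hn.
    have := K1 HX Ha HF hn (fun x hx => Rnot_lt_le _ _ hx); rewrite -/r /c2; lra.
  have Hup : forall G : UF OX, proj1_sig G (fun x => a (proj1_sig f x) < c2) ->
      sF HX Ha (proj2_sig G) f <= c2.
    move=> G hG; apply: G1; exists (fun x => a (proj1_sig f x) < c2); split => // x hx; lra.
  case: (Rlt_or_le 0 (r - d / 2)) => hc1.
  + set c1 := r - d / 2.
    have cl1 := clopen_compl HX (clopen_lt Ha f hc1).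
    have F1 : Fp (fun x => ~ a (proj1_sig f x) < c1) by apply: (K3 (HX:=HX) (Ha:=Ha) (HF:=HF)) => //; rewrite /c1 -/r; lra.
    exists (fun x => (~ a (proj1_sig f x) < c1) /\ a (proj1_sig f x) < c2); split.
      exact: (clopen_inter HX cl1 cl2).
    split; first exact: (UF_inter HF F1 F2).
    move=> G hG; apply/HV'; apply: Hd; rewrite /disc /=.
    have h2 := Hup G (UF_up (proj2_sig G) hG cl2 (fun x hx => proj2 hx)).
    have h1 : c1 <= sF HX Ha (proj2_sig G) f.
      apply: (K1 HX Ha (proj2_sig G) hG) => x [hx _]; lra.
    apply: Rabs_def1; rewrite /c1 /c2 in h1 h2; lra.
  + exists (fun x => a (proj1_sig f x) < c2); split => //; split => //.
    move=> G hG; apply/HV'; apply: Hd; rewrite /disc /=.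
    have h2 := Hup G hG.
    have h1 := sF_ge0 HX Ha (proj2_sig G) f.
    apply: Rabs_def1; rewrite /c2 in h2; lra.
Qed.
End Main.

Theorem mainTheorem1 (X : Type) (OX : (X -> Prop) -> Prop)
  (HX : is_topology OX) (k : fieldType) (a : k -> R)
  (Ha : nonarch_abs a) (Hc : abs_complete a) :
  (forall p : BSC OX a, is_maximal_ideal (supp p)) /\
  exists Phi : BSC OX a -> UF OX,
    (forall (p : BSC OX a) (U : X -> Prop), proj1_sig (Phi p) U <-> F_supp p U) /\
    homeomorphism (@BSC_open X OX k a) (@UF_open X OX) Phi.
Proof.
split; first exact: (supp_max HX Ha).
exists (PhiM HX Ha); split; first by move=> p U.
exists (gM HX Ha); split; first exact: (gPhi HX Ha).
split; first exact: (Phig HX Ha).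
split; [exact: (Phi_cont HX Ha) | exact: g_cont].
Qed.
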